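(* Let $\{U_y\}_{y\in\mathbb{Z}}$ be $3\times 3$ unitary matrices $U_y=\begin{bmatrix} a_y & b_y & c_y\\ d_y & e_y & f_y\\ g_y & h_y & i_y\end{bmatrix}$ with complex entries, defining the three-state inhomogeneous quantum walk on $\mathbb{Z}$ described in the context. Let $\lambda\in S^1=\{z\in\mathbb{C}:|z|=1\}$ and assume that for every $y\in\mathbb{Z}$ the quantities $a_y(\lambda-e_y)+b_yd_y$ and $h_yf_y+i_y(\lambda-e_y)$ are nonzero (so that all entries below are finite). Define, for $y\in\mathbb{Z}$, the transfer matrices $T^{(+)}_y=(t^{(+)}_{jk})_{j,k=1}^3$ and $T^{(-)}_y=(t^{(-)}_{jk})_{j,k=1}^3$ by \[ t^{(+)}_{11}=\frac{(\lambda-e_y)(\lambda^2-g_{y-1}c_y)-g_{y-1}b_yf_y}{\lambda\{a_y(\lambda-e_y)+b_yd_y\}},\quad t^{(+)}_{12}=-\frac{h_{y-1}\{b_yf_y+c_y(\lambda-e_y)\}}{\lambda\{a_y(\lambda-e_y)+b_yd_y\}},\quad t^{(+)}_{13}=-\frac{i_{y-1}\{b_yf_y+c_y(\lambda-e_y)\}}{\lambda\{a_y(\lambda-e_y)+b_yd_y\}}, \] \[ t^{(+)}_{21}=\frac{\lambda^2d_y+g_{y-1}(a_yf_y-c_yd_y)}{\lambda\{a_y(\lambda-e_y)+b_yd_y\}},\quad t^{(+)}_{22}=\frac{h_{y-1}(a_yf_y-c_yd_y)}{\lambda\{a_y(\lambda-e_y)+b_yd_y\}},\quad t^{(+)}_{23}=\frac{i_{y-1}(a_yf_y-c_yd_y)}{\lambda\{a_y(\lambda-e_y)+b_yd_y\}},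 \] \[ t^{(+)}_{31}=\frac{g_{y-1}}{\lambda},\quad t^{(+)}_{32}=\frac{h_{y-1}}{\lambda},\quad t^{(+)}_{33}=\frac{i_{y-1}}{\lambda}, \] and \[ t^{(-)}_{11}=\frac{a_{y+1}}{\lambda},\quad t^{(-)}_{12}=\frac{b_{y+1}}{\lambda},\quad t^{(-)}_{13}=\frac{c_{y+1}}{\lambda}, \] \[ t^{(-)}_{21}=-\frac{a_{y+1}(f_yg_y-i_yd_y)}{\lambda\{h_yf_y+i_y(\lambda-e_y)\}},\quad t^{(-)}_{22}=-\frac{b_{y+1}(f_yg_y-i_yd_y)}{\lambda\{h_yf_y+i_y(\lambda-e_y)\}},\quad t^{(-)}_{23}=\frac{\lambda^2f_y-c_{y+1}(f_yg_y-i_yd_y)}{\lambda\{h_yf_y+i_y(\lambda-e_y)\}}, \] \[ t^{(-)}_{31}=-\frac{a_{y+1}\{h_yd_y+g_y(\lambda-e_y)\}}{\lambda\{h_yf_y+i_y(\lambda-e_y)\}},\quad t^{(-)}_{32}=-\frac{b_{y+1}\{h_yd_y+g_y(\lambda-e_y)\}}{\lambda\{h_yf_y+i_y(\lambda-e_y)\}},\quad t^{(-)}_{33}=\frac{(\lambda-e_y)(\lambda^2-g_yc_{y+1})-h_yc_{y+1}d_y}{\lambda\{h_yf_y+i_y(\lambda-e_y)\}}. \] If $\Psi\in\mathrm{Map}(\mathbb{Z},\mathbb{C}^3)$, $\Psi(x)=[\Psi^L(x),\Psi^O(x),\Psi^R(x)]^T$, solves the eigenvalue equation $U^{(s)}\Psi=\lambda\Psi$,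 then \[ \Psi(x)=\begin{cases} T^{(+)}_xT^{(+)}_{x-1}\cdots T^{(+)}_1\Psi(0) & (x\ge 1),\\ \Psi(0) & (x=0),\\ T^{(-)}_xT^{(-)}_{x+1}\cdots T^{(-)}_{-1}\Psi(0) & (x\le -1),\end{cases} \] and the measure $\mu(x)=\|\Psi(x)\|^2=|\Psi^L(x)|^2+|\Psi^O(x)|^2+|\Psi^R(x)|^2$ $(x\in\mathbb{Z})$ is a stationary measure of the walk, i.e. $\mu\in\Sigma_s$.
   Context: The three-state quantum walk on $\mathbb{Z}$: for $x\in\mathbb{Z}$ set $U_x=P_x+R_x+Q_x$ where $P_x$ keeps only the first row $(a_x,b_x,c_x)$ of $U_x$ (other rows zero), $R_x$ keeps only the second row $(d_x,e_x,f_x)$, and $Q_x$ keeps only the third row $(g_x,h_x,i_x)$. The operator $U^{(s)}$ acts on $\Psi\in(\mathbb{C}^3)^{\mathbb{Z}}=\mathrm{Map}(\mathbb{Z},\mathbb{C}^3)$ by $(U^{(s)}\Psi)(x)=P_{x+1}\Psi(x+1)+R_x\Psi(x)+Q_{x-1}\Psi(x-1)$; the walk's time evolution is $\Psi_n=(U^{(s)})^n\Psi_0$. Equivalently, $U^{(s)}\Psi=\lambda\Psi$ means, for all $x$: $\lambda\Psi^L(x)=a_{x+1}\Psi^L(x+1)+b_{x+1}\Psi^O(x+1)+c_{x+1}\Psi^R(x+1)$, $\lambda\Psi^O(x)=d_x\Psi^L(x)+e_x\Psi^O(x)+f_x\Psi^R(x)$, $\lambda\Psi^R(x)=g_{x-1}\Psi^L(x-1)+h_{x-1}\Psi^O(x-1)+i_{x-1}\Psi^R(x-1)$.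 Let $\phi:(\mathbb{C}^3)^{\mathbb{Z}}\to[0,\infty)^{\mathbb{Z}}$, $\phi(\Psi)(x)=|\Psi^L(x)|^2+|\Psi^O(x)|^2+|\Psi^R(x)|^2$. The set of stationary measures is $\Sigma_s=\{\phi(\Psi_0): \Psi_0\in(\mathbb{C}^3)^{\mathbb{Z}},\ \phi((U^{(s)})^n\Psi_0)=\phi(\Psi_0)\text{ for all } n\ge 0\}$. *)

(* Defs.v *)
From HB Require Import structures.
From mathcomp Require Import all_boot all_order all_algebra.
From mathcomp Require Import complex reals.
Set Implicit Arguments. Unset Strict Implicit. Unset Printing Implicit Defensive.
Import Order.TTheory GRing.Theory Num.Theory.
Local Open Scope ring_scope.

Section QW.
Variable R : realType.
Local Notation C := (R[i]).

(* A coin field y |-> U_y; rows/cols indexed 0,1,2 so that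
   a = U 0 0, b = U 0 1, c = U 0 2, d = U 1 0, e = U 1 1, f = U 1 2,
   g = U 2 0, h = U 2 1, i = U 2 2. *)
Definition coins := int -> 'M[C]_3.

Definition unitary3 (M : 'M[C]_3) : Prop :=
  M *m (map_mx conjc M)^T = 1%:M.

Definition i0 : 'I_3 := @Ordinal 3 0 isT.
Definition i1 : 'I_3 := @Ordinal 3 1 isT.
Definition i2 : 'I_3 := @Ordinal 3 2 isT.
Definition ca (U : coins) y := U y i0 i0.
Definition cb (U : coins) y := U y i0 i1.
Definition cc (U : coins) y := U y i0 i2.
Definition cd (U : coins) y := U y i1 i0.
Definition ce (U : coins) y := U y i1 i1.
Definition cf (U : coins) y := U y i1 i2.
Definition cg (U : coins) y := U y i2 i0.
Definition ch (U : coins) y := U y i2 i1.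
Definition ci (U : coins) y := U y i2 i2.

(* States: Map(Z, C^3), Psi x is a column vector [Psi^L; Psi^O; Psi^R]. *)
Definition state := int -> 'cV[C]_3.

Definition rowpart (k : 'I_3) (M : 'M[C]_3) : 'M[C]_3 :=
  \matrix_(j, l) (if j == k then M j l else 0).
Definition Pm (U : coins) x := rowpart i0 (U x).
Definition Rm (U : coins) x := rowpart i1 (U x).
Definition Qm (U : coins) x := rowpart i2 (U x).

Definition Us (U : coins) (Psi : state) : state := fun x =>
  Pm U (x + 1) *m Psi (x + 1) + Rm U x *m Psi x + Qm U (x - 1) *m Psi (x - 1).

Definition phi (Psi : state) : int -> C := fun x =>
  `|Psi x i0 0| ^+ 2 + `|Psi x i1 0| ^+ 2 + `|Psi x i2 0| ^+ 2.

Definition Sigma_s (U : coins) (mu : int -> C) : Prop :=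
  exists Psi0 : state,
    (forall n : nat, phi (iter n (Us U) Psi0) = phi Psi0) /\ mu = phi Psi0.

Definition Tplus (U : coins) (l : C) (y : int) : 'M[C]_3 :=
  let a := ca U y in let b := cb U y in let c := cc U y in
  let d := cd U y in let e := ce U y in let f := cf U y in
  let g' := cg U (y - 1) in let h' := ch U (y - 1) in let i' := ci U (y - 1) in
  let D := l * (a * (l - e) + b * d) in
  \matrix_(j, k)
    (if j == i0 then
       (if k == i0 then ((l - e) * (l ^+ 2 - g' * c) - g' * b * f) / D
        else if k == i1 then - (h' * (b * f + c * (l - e))) / D
        else - (i' * (b * f + c * (l - e))) / D)
     else if j == i1 then
       (if k == i0 then (l ^+ 2 * d + g' * (a * f - c * d)) / D
        else if k == i1 then h' * (a * f - c * d) / D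
        else i' * (a * f - c * d) / D)
     else
       (if k == i0 then g' / l
        else if k == i1 then h' / l
        else i' / l)).

Definition Tminus (U : coins) (l : C) (y : int) : 'M[C]_3 :=
  let a' := ca U (y + 1) in let b' := cb U (y + 1) in let c' := cc U (y + 1) in
  let d := cd U y in let e := ce U y in let f := cf U y in
  let g := cg U y in let h := ch U y in let i := ci U y in
  let D := l * (h * f + i * (l - e)) in
  \matrix_(j, k)
    (if j == i0 then
       (if k == i0 then a' / l
        else if k == i1 then b' / l
        else c' / l)
     else if j == i1 then
       (if k == i0 then - (a' * (f * g - i * d)) / D
        else if k == i1 then - (b' * (f * g - i * d)) / D
        else (l ^+ 2 * f - c' * (f * g - i * d)) / D)
     else
       (if k == i0 then - (a' * (h * d + g * (l - e))) / D
        else if k == i1 then - (b' * (h * d + g * (l - e))) / D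
        else ((l - e) * (l ^+ 2 - g * c') - h * c' * d) / D)).

Fixpoint Tpos (U : coins) (l : C) (n : nat) : 'M[C]_3 :=
  match n with
  | O => 1%:M
  | S m => Tplus U l (m.+1)%:Z *m Tpos U l m
  end.

Fixpoint Tneg (U : coins) (l : C) (n : nat) : 'M[C]_3 :=
  match n with
  | O => 1%:M
  | S m => Tminus U l (- (m.+1)%:Z) *m Tneg U l m
  end.

End QW.

(* Main.v *)
Require Import Defs.
From HB Require Import structures.
From mathcomp Require Import all_boot all_order all_algebra.
From mathcomp Require Import complex reals.
From mathcomp Require Import ring.
From Stdlib Require Import FunctionalExtensionality.
Import Order.TTheory GRing.Theory Num.Theory.
Local Open Scope ring_scope.

Lemma solve3 (F : fieldType) (D v A B C x y z : F) : D != 0 ->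
  A*x+B*y+C*z = D*v -> v = A/D*x + B/D*y + C/D*z.
Proof.
move=> HD H; rewrite ![_ / D * _]mulrAC -!mulrDl H [D*v]mulrC mulfK //.
Qed.

Lemma alg_plus (F : fieldType) (l a b c d e f g h ii Ly Oy Ry Lp Op Rp : F) :
 l != 0 -> a*(l-e)+b*d != 0 ->
 l*Lp = a*Ly+b*Oy+c*Ry -> l*Oy = d*Ly+e*Oy+f*Ry -> l*Ry = g*Lp+h*Op+ii*Rp ->
 [/\ Ly = ((l-e)*(l^+2 - g*c) - g*b*f)/(l*(a*(l-e)+b*d)) * Lp
          + (-(h*(b*f+c*(l-e))))/(l*(a*(l-e)+b*d)) * Op
          + (-(ii*(b*f+c*(l-e))))/(l*(a*(l-e)+b*d)) * Rp,
     Oy = (l^+2*d + g*(a*f-c*d))/(l*(a*(l-e)+b*d)) * Lp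
          + h*(a*f-c*d)/(l*(a*(l-e)+b*d))*Op + ii*(a*f-c*d)/(l*(a*(l-e)+b*d))*Rp &
     Ry = g/l*Lp + h/l*Op + ii/l*Rp].
Proof.
move=> Hl HD E1 E2 E3.
have z1 : l*Lp - (a*Ly+b*Oy+c*Ry) = 0 by rewrite E1 subrr.
have z2 : l*Oy - (d*Ly+e*Oy+f*Ry) = 0 by rewrite E2 subrr.
have z3 : l*Ry - (g*Lp+h*Op+ii*Rp) = 0 by rewrite E3 subrr.
have HD' : l*(a*(l-e)+b*d) != 0 by rewrite mulf_neq0.
split; apply: solve3 => //; apply/eqP; rewrite -subr_eq0; apply/eqP.
- have -> : ((l-e)*(l^+2 - g*c) - g*b*f) * Lp + (-(h*(b*f+c*(l-e)))) * Op
          + (-(ii*(b*f+c*(l-e)))) * Rp - l*(a*(l-e)+b*d) * Ly =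
     l*(l-e)*(l*Lp - (a*Ly+b*Oy+c*Ry)) + l*b*(l*Oy - (d*Ly+e*Oy+f*Ry))
     + (b*f+c*(l-e))*(l*Ry - (g*Lp+h*Op+ii*Rp)) by ring.
  by rewrite z1 z2 z3 !mulr0 !addr0.
- have -> : (l^+2*d + g*(a*f-c*d)) * Lp + h*(a*f-c*d)*Op + ii*(a*f-c*d)*Rp
     - l*(a*(l-e)+b*d) * Oy =
     l*d*(l*Lp - (a*Ly+b*Oy+c*Ry)) - l*a*(l*Oy - (d*Ly+e*Oy+f*Ry))
     - (a*f-c*d)*(l*Ry - (g*Lp+h*Op+ii*Rp)) by ring.
  by rewrite z1 z2 z3 !mulr0 !subr0.
Qed.

Lemma alg_minus (F : fieldType) (l a b c d e f g h ii Ly Oy Ry Lp Op Rp : F) :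
 l != 0 -> h*f+ii*(l-e) != 0 ->
 l*Ly = a*Lp+b*Op+c*Rp -> l*Oy = d*Ly+e*Oy+f*Ry -> l*Rp = g*Ly+h*Oy+ii*Ry ->
 [/\ Ly = a/l*Lp + b/l*Op + c/l*Rp,
     Oy = (-(a*(f*g-ii*d)))/(l*(h*f+ii*(l-e))) * Lp
          + (-(b*(f*g-ii*d)))/(l*(h*f+ii*(l-e))) * Op
          + (l^+2*f - c*(f*g-ii*d))/(l*(h*f+ii*(l-e))) * Rp &
     Ry = (-(a*(h*d+g*(l-e))))/(l*(h*f+ii*(l-e))) * Lp
          + (-(b*(h*d+g*(l-e))))/(l*(h*f+ii*(l-e))) * Op
          + ((l-e)*(l^+2-g*c) - h*c*d)/(l*(h*f+ii*(l-e))) * Rp].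
Proof.
move=> Hl HD E1 E2 E3.
have z1 : l*Ly - (a*Lp+b*Op+c*Rp) = 0 by rewrite E1 subrr.
have z2 : l*Oy - (d*Ly+e*Oy+f*Ry) = 0 by rewrite E2 subrr.
have z3 : l*Rp - (g*Ly+h*Oy+ii*Ry) = 0 by rewrite E3 subrr.
have HD' : l*(h*f+ii*(l-e)) != 0 by rewrite mulf_neq0.
split; apply: solve3 => //; apply/eqP; rewrite -subr_eq0; apply/eqP.
- have -> : (-(a*(f*g-ii*d))) * Lp + (-(b*(f*g-ii*d))) * Op
          + (l^+2*f - c*(f*g-ii*d)) * Rp - l*(h*f+ii*(l-e)) * Oy =
     (f*g-ii*d)*(l*Ly - (a*Lp+b*Op+c*Rp)) - l*ii*(l*Oy - (d*Ly+e*Oy+f*Ry))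
     + l*f*(l*Rp - (g*Ly+h*Oy+ii*Ry)) by ring.
  by rewrite z1 z2 z3 !mulr0 !addr0 subr0.
- have -> : (-(a*(h*d+g*(l-e)))) * Lp + (-(b*(h*d+g*(l-e)))) * Op
          + ((l-e)*(l^+2-g*c) - h*c*d) * Rp - l*(h*f+ii*(l-e)) * Ry =
     (h*d+g*(l-e))*(l*Ly - (a*Lp+b*Op+c*Rp)) + l*h*(l*Oy - (d*Ly+e*Oy+f*Ry))
     + l*(l-e)*(l*Rp - (g*Ly+h*Oy+ii*Ry)) by ring.
  by rewrite z1 z2 z3 !mulr0 !addr0.
Qed.

Section M.
Variable R : realType.
Local Notation C := (R[i]).

Lemma sum3 (F : 'I_3 -> C) : \sum_(l < 3) F l = F i0 + F i1 + F i2.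
Proof.
rewrite !big_ord_recl big_ord0 addr0 addrA; congr (F _ + F _ + F _); exact: val_inj.
Qed.

Lemma ord3P (j : 'I_3) : j = i0 \/ j = i1 \/ j = i2.
Proof.
case: j => [[|[|[|m]]] Hm]; [left|right;left|right;right|by []]; exact: val_inj.
Qed.

Lemma rowpartE (k j : 'I_3) (M : 'M[C]_3) (v : 'cV[C]_3) :
  (rowpart k M *m v) j 0 =
  if j == k then M j i0 * v i0 0 + M j i1 * v i1 0 + M j i2 * v i2 0 else 0.
Proof.
rewrite mxE sum3 !mxE; case: (j == k) => //; by rewrite !mul0r !addr0.
Qed.

Lemma mulmx3E (M : 'M[C]_3) (v : 'cV[C]_3) j :
  (M *m v) j 0 = M j i0 * v i0 0 + M j i1 * v i1 0 + M j i2 * v i2 0.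
Proof. by rewrite mxE sum3. Qed.

Variables (U : coins R) (lam : C) (Psi : state R).
Hypothesis Heig : forall x : int, Us U Psi x = lam *: Psi x.

Lemma addE (A B : 'cV[C]_3) j : (A + B) j 0 = A j 0 + B j 0.
Proof. by rewrite mxE. Qed.

Lemma UsE x j : Us U Psi x j 0 =
  (if j == i0 then U (x+1) j i0 * Psi (x+1) i0 0 + U (x+1) j i1 * Psi (x+1) i1 0 + U (x+1) j i2 * Psi (x+1) i2 0 else 0)
 + (if j == i1 then U x j i0 * Psi x i0 0 + U x j i1 * Psi x i1 0 + U x j i2 * Psi x i2 0 else 0)
 + (if j == i2 then U (x-1) j i0 * Psi (x-1) i0 0 + U (x-1) j i1 * Psi (x-1) i1 0 + U (x-1) j i2 * Psi (x-1) i2 0 else 0).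
Proof. by rewrite /Us !addE !rowpartE. Qed.

Lemma E1 x : lam * Psi x i0 0 =
  ca U (x+1) * Psi (x+1) i0 0 + cb U (x+1) * Psi (x+1) i1 0 + cc U (x+1) * Psi (x+1) i2 0.
Proof.
have := congr1 (fun M : 'cV[C]_3 => M i0 0) (Heig x).
rewrite /= [in RHS]mxE UsE /= => <-.
by rewrite !addr0.
Qed.

Lemma E2 x : lam * Psi x i1 0 =
  cd U x * Psi x i0 0 + ce U x * Psi x i1 0 + cf U x * Psi x i2 0.
Proof.
have := congr1 (fun M : 'cV[C]_3 => M i1 0) (Heig x).
rewrite /= [in RHS]mxE UsE /= => <-.
by rewrite !addr0 add0r.
Qed.

Lemma E3 x : lam * Psi x i2 0 =
  cg U (x-1) * Psi (x-1) i0 0 + ch U (x-1) * Psi (x-1) i1 0 + ci U (x-1) * Psi (x-1) i2 0.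
Proof.
have := congr1 (fun M : 'cV[C]_3 => M i2 0) (Heig x).
rewrite /= [in RHS]mxE UsE /= => <-.
by rewrite !add0r.
Qed.

Lemma step_plus y : lam != 0 ->
  ca U y * (lam - ce U y) + cb U y * cd U y != 0 ->
  Psi y = Tplus U lam y *m Psi (y - 1).
Proof.
move=> Hl HD.
have e1 := E1 (y - 1); rewrite subrK in e1.
have [a1 a2 a3] := @alg_plus C _ _ _ _ _ _ _ _ _ _ _ _ _ _ _ _ Hl HD e1 (E2 y) (E3 y).
apply/matrixP => j k; rewrite (ord1 k) mulmx3E /Tplus.
by case: (ord3P j) => [->|[->|->]]; rewrite !mxE /=.
Qed.

Lemma step_minus y : lam != 0 ->
  ch U y * cf U y + ci U y * (lam - ce U y) != 0 ->
  Psi y = Tminus U lam y *m Psi (y + 1).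
Proof.
move=> Hl HD.
have e3 := E3 (y + 1); rewrite addrK in e3.
have [a1 a2 a3] := @alg_minus C _ _ _ _ _ _ _ _ _ _ _ _ _ _ _ _ Hl HD (E1 y) (E2 y) e3.
apply/matrixP => j k; rewrite (ord1 k) mulmx3E /Tminus.
by case: (ord3P j) => [->|[->|->]]; rewrite !mxE /=.
Qed.

End M.

Theorem theorem1 (R : realType) (U : coins R) (lam : R[i]) (Psi : state R) :
  (forall y : int, unitary3 (U y)) ->
  `|lam| = 1 ->
  (forall y : int, ca U y * (lam - ce U y) + cb U y * cd U y != 0) ->
  (forall y : int, ch U y * cf U y + ci U y * (lam - ce U y) != 0) ->
  (forall x : int, Us U Psi x = lam *: Psi x) ->
  (forall n : nat, Psi n%:Z = Tpos U lam n *m Psi 0) /\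
  (forall n : nat, Psi (- n%:Z) = Tneg U lam n *m Psi 0) /\
  Sigma_s U (phi Psi).
Proof.
move=> _ Hn HDp HDm Heig.
have Hl : lam != 0 by rewrite -normr_eq0 Hn oner_eq0.
split; [|split].
- elim=> [|n IH]; first by rewrite mul1mx.
  rewrite (@step_plus R U lam Psi Heig n.+1 Hl (HDp _)) /=.
  have -> : (n.+1%:Z - 1 = n%:Z)%R by rewrite -addn1 PoszD addrK.
  by rewrite IH mulmxA.
- elim=> [|n IH]; first by rewrite mul1mx.
  rewrite (@step_minus R U lam Psi Heig (- n.+1%:Z) Hl (HDm _)) /=.
  have -> : (- n.+1%:Z + 1 = - n%:Z)%R by rewrite -addn1 PoszD opprD addrNK.
  by rewrite IH mulmxA.
- exists Psi; split=> // n.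
  have Hit : iter n (Us U) Psi = fun x => lam ^+ n *: Psi x.
    elim: n => [|n IH] /=.
      by apply: functional_extensionality => x; rewrite expr0 scale1r.
    rewrite IH; apply: functional_extensionality => x.
    rewrite /Us -!scalemxAr -!scalerDr.
    have := Heig x; rewrite /Us => ->.
    by rewrite scalerA exprSr.
  rewrite Hit; apply: functional_extensionality => x.
  by rewrite /phi !mxE !normrM normrX Hn expr1n !mul1r.
Qed.
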